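(* Let $G = (V,E)$ be an $n$-vertex graph. Then there exists a set $A \subseteq V$ such that $G[A]$ is $\frac{n}{5\alpha(G)}$-connected.
   Context: $\alpha(G)$ denotes the independence number of $G$. A graph is $k$-connected if it has more than $k$ vertices and remains connected after deleting any fewer than $k$ vertices. *)

(* Defs.v *)
From mathcomp Require Import all_boot all_order all_algebra.
Set Implicit Arguments. Unset Strict Implicit. Unset Printing Implicit Defensive.
Import Order.TTheory GRing.Theory Num.Theory.

Definition simple_graph (T : finType) (e : rel T) : Prop :=
  symmetric e /\ irreflexive e.

Definition independent (T : finType) (e : rel T) (I : {set T}) : bool :=
  [forall x in I, forall y in I, ~~ e x y].

Definition alpha (T : finType) (e : rel T) : nat :=
  \max_(I : {set T} | independent e I) #|I|.

Definition connected_on (T : finType) (e : rel T) (B : {set T}) : Prop :=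
  forall x y, x \in B -> y \in B ->
    connect [rel u v | [&& e u v, u \in B & v \in B]] x y.

Definition k_connected_on (T : finType) (e : rel T) (A : {set T}) (k : rat) : Prop :=
  (k < (#|A|%:R : rat))%R /\
  forall S : {set T}, S \subset A -> ((#|S|%:R : rat) < k)%R ->
    connected_on e (A :\: S).

(* Main.v *)
From mathcomp Require Import all_boot all_order all_algebra.
From mathcomp Require Import zify.
Require Import Defs.
Import Order.TTheory GRing.Theory Num.Theory.
Lemma sqr2 (x y : nat) : x * y * 2 <= x * x + y * y.
Proof. case: (leqP x y) => h; nia. Qed.
Lemma arith1 N Nw w r a : N <= Nw + 2 * r * w -> a * Nw <= a.-1 * (w*w) -> Nw <= w * w -> (a = 0 -> w = 0) ->
 a.+1 * N <= a * ((w + r) * (w + r)).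
Proof.
move=> h1 h2 h3 h4. case: a h2 h4 => [|a] h2 h4. rewrite h4 // in h1 h3 *. lia.
simpl in h2. set b := a.+1 in h2 *.
have hb : 0 < b by [].
suff : b * (b.+1 * N) <= b * (b * ((w + r) * (w + r))) by rewrite leq_pmul2l.
have e1 : b * (b.+1 * N) <= b.+1 * (b * Nw) + 2 * b * b.+1 * r * w.
  have := leq_mul (leqnn (b * b.+1)) h1. nia.
have e2 : b.+1 * (b * Nw) <= b.+1 * (a * (w * w)) by rewrite leq_mul2l h2 orbT.
have sq := sqr2 (b*r) w.
nia.
Qed.

Section Graph.
Variable T : finType.
Variable e : rel T.
Hypothesis esym : symmetric e.
Hypothesis eirr : irreflexive e.

Definition PE (B : {set T}) : {set T * T} := [set p | [&& p.1 \in B, p.2 \in B & e p.1 p.2]].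
Definition PN (B : {set T}) : {set T * T} :=
  [set p | [&& p.1 \in B, p.2 \in B, p.1 != p.2 & ~~ e p.1 p.2]].
Definition nb (B : {set T}) x := [set y in B | e x y].
Definition nn (B : {set T}) x := [set y in B | (y != x) && ~~ e x y].

Lemma card_pairs (P : {set T}) (f : T -> {set T}) :
  #|[set p : T*T | (p.1 \in P) && (p.2 \in f p.1)]| = \sum_(i in P) #|f i|.
Proof.
rewrite -sum1_card.
rewrite (eq_bigl (fun p : T*T => (p.1 \in P) && (p.2 \in f p.1))); last by move=> p; rewrite inE.
rewrite -(@pair_big_dep _ _ _ T T (fun i => i \in P) (fun i j => j \in f i) (fun _ _ => 1)) /=.
by apply: eq_bigr => i _; rewrite sum1_card.
Qed.

Lemma PN_sub B : #|PN B| <= #|B| * #|B|.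
Proof.
rewrite -cardsX; apply: subset_leq_card; apply/subsetP => -[x y].
by rewrite !inE /= => /and4P [-> -> _ _].
Qed.

Lemma swap_card (X : {set T * T}) : #|[set (p.2, p.1) | p in X]| = #|X|.
Proof. by apply: card_imset => -[? ?] [? ?] /= [-> ->]. Qed.

Lemma turan a : forall B : {set T},
  (forall I : {set T}, I \subset B -> independent e I -> #|I| <= a) ->
  a * #|PN B| <= a.-1 * (#|B| * #|B|).
Proof.
elim: a => [|a IH] B HB; first by rewrite mul0n.
case: (set_0Vmem B) => [->|[x0 Hx0]].
  by have := PN_sub set0; rewrite cards0 muln0 leqn0 => /eqP ->; rewrite muln0.
case: (@arg_maxnP _ x0 (mem B) (fun x => #|nn B x|) Hx0) => v Hv Hmax.
set W := nn B v.
have WB : W \subset B by apply/subsetP => y; rewrite inE => /andP [].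
have vW : v \notin W by rewrite inE eqxx andbF.
have HW : forall I : {set T}, I \subset W -> independent e I -> #|I| <= a.
  move=> I IW Iind; rewrite /= in Hv.
  have vI : v \notin I by apply: contra vW => /(subsetP IW).
  have := HB (v |: I).
  rewrite cardsU1 vI add1n ltnS; apply.
    by rewrite subUset sub1set Hv (subset_trans IW WB).
  apply/forallP => p; apply/implyP => hp; apply/forallP => q; apply/implyP => hq.
  move: hp hq; rewrite !in_setU1 => /orP [/eqP -> | hp] /orP [/eqP -> | hq].
  - by rewrite eirr.
  - by move: (subsetP IW q hq); rewrite inE => /andP [_ /andP [_ ->]].
  - by move: (subsetP IW p hp); rewrite inE esym => /andP [_ /andP [_ ->]].
  - by move/forallP: Iind => /(_ p); rewrite hp /= => /forallP /(_ q); rewrite hq.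
have IHW := IH W HW.
set X := [set p : T*T | (p.1 \in B :\: W) && (p.2 \in nn B p.1)].
have cover : PN B \subset PN W :|: X :|: [set (p.2, p.1) | p in X].
  apply/subsetP => -[x y]; rewrite inE /= => /and4P [hx hy hxy hexy].
  rewrite !in_setU.
  case hxW: (x \in W); case hyW: (y \in W).
  - by rewrite [_ \in PN W]inE /= hxW hyW hxy hexy.
  - apply/orP; right; apply/imsetP; exists (y, x) => //.
    rewrite [_ \in X]inE /= in_setD hyW hy /=.
    by rewrite [x \in nn B y]inE hx hxy esym hexy.
  - by rewrite [_ \in X]inE /= in_setD hxW hx [y \in nn _ _]inE hy (eq_sym y) hxy hexy orbT.
  - by rewrite [_ \in X]inE /= in_setD hxW hx [y \in nn _ _]inE hy (eq_sym y) hxy hexy orbT.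
have cX : #|X| <= (#|B| - #|W|) * #|W|.
  have hBW : #|B :\: W| = #|B| - #|W| by rewrite cardsD (setIidPr WB).
  rewrite card_pairs -hBW -sum_nat_const.
  apply: leq_sum => i; rewrite inE => /andP [_ hi]; exact: Hmax.
have cPN : #|PN B| <= #|PN W| + 2 * (#|B| - #|W|) * #|W|.
  have c0 := subset_leq_card cover.
  have u1 := (leq_card_setU (PN W :|: X) [set (p.2, p.1) | p in X]).1.
  have u2 := (leq_card_setU (PN W) X).1.
  rewrite swap_card in u1.
  set z := (#|B| - #|W|) * #|W| in cX.
  have -> : 2 * (#|B| - #|W|) * #|W| = 2 * z by rewrite /z mulnA.
  clearbody z.
  apply: (leq_trans c0); apply: (leq_trans u1).
  rewrite mul2n -addnn addnA; apply: leq_add => //.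
  apply: (leq_trans u2); by rewrite leq_add2l.
have WcB : #|W| <= #|B| by apply: subset_leq_card.
have a0 : a = 0 -> #|W| = 0.
  move=> a0; case: (set_0Vmem W) => [->|[w hw]]; first by rewrite cards0.
  have : #|[set w]| <= a.
    apply: HW; first by rewrite sub1set.
    apply/forallP => p; apply/implyP; rewrite inE => /eqP ->.
    by apply/forallP => q; apply/implyP; rewrite inE => /eqP ->; rewrite eirr.
  by rewrite cards1 a0.
have := @arith1 _ _ _ _ _ cPN IHW (PN_sub W) a0.
by rewrite subnKC.
Qed.

Definition Rel (B : {set T}) := [rel u v | [&& e u v, u \in B & v \in B]].

Lemma PE_PN_total : #|T| * #|T| <= #|PE setT| + #|PN setT| + #|T|.
Proof.
have -> : #|T| * #|T| = #|[set: T * T]| by rewrite cardsT card_prod.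
have cd : #|[set (x, x) | x : T]| = #|T| by rewrite card_imset // => ? ? [].
rewrite -cd.
have sub : [set: T * T] \subset PE setT :|: PN setT :|: [set (x, x) | x : T].
  apply/subsetP => -[x y] _; rewrite !in_setU.
  case: (eqVneq x y) => [->|nxy].
    by apply/orP; right; apply/imsetP; exists y.
  by rewrite ![_ \in PE _]inE ![_ \in PN _]inE /= !inE nxy; case: (e x y).
apply: (leq_trans (subset_leq_card sub)).
apply: (leq_trans (leq_card_setU _ _).1); rewrite leq_add2r.
exact: (leq_card_setU _ _).1.
Qed.

Lemma PE_le B : #|PE B| + #|B| <= #|B| * #|B|.
Proof.
have cd : #|[set (x, x) | x in B]| = #|B| by rewrite card_imset // => ? ? [].
rewrite -cardsX -cd.
have dis : [disjoint PE B & [set (x, x) | x in B]].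
  rewrite -setI_eq0; apply/eqP/setP => -[x y]; rewrite !inE /=.
  apply/negP => /andP [/and3P [_ _ hxy] /imsetP [z _ [ex ey]]].
  by rewrite ex ey eirr in hxy.
have := leq_card_setU (PE B) [set (x, x) | x in B]; rewrite dis => -[_ /eqP <-].
apply: subset_leq_card; apply/subsetP => -[x y]; rewrite !inE /=.
case/orP => [/and3P [-> -> _] //|/imsetP [z hz [-> ->]]].
by rewrite /= hz.
Qed.

Lemma PE_del H v : #|PE H| <= #|PE (H :\ v)| + 2 * #|nb H v|.
Proof.
set N := nb H v.
have c1 : #|[set (v, u) | u in N]| = #|N| by rewrite card_imset // => ? ? [].
have c2 : #|[set (u, v) | u in N]| = #|N| by rewrite card_imset // => ? ? [].
have sub : PE H \subset PE (H :\ v) :|: [set (v, u) | u in N] :|: [set (u, v) | u in N].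
  apply/subsetP => -[x y]; rewrite inE /= => /and3P [hx hy hxy].
  rewrite !in_setU.
  case: (eqVneq x v) => [exv|nxv].
    apply/orP; left; apply/orP; right; apply/imsetP; exists y => //.
      by rewrite inE hy -exv hxy.
    by rewrite exv.
  case: (eqVneq y v) => [eyv|nyv].
    apply/orP; right; apply/imsetP; exists x => //.
      by rewrite inE hx -eyv esym hxy.
    by rewrite eyv.
  by rewrite [_ \in PE _]inE /= !in_setD1 nxv nyv hx hy hxy.
apply: (leq_trans (subset_leq_card sub)).
apply: (leq_trans (leq_card_setU _ _).1).
rewrite c2 mul2n -addnn addnA leq_add2r.
by apply: (leq_trans (leq_card_setU _ _).1); rewrite c1.
Qed.

Lemma mader c : 0 < c -> 2 * c <= #|T| -> 4 * c * (#|T| - c) < #|PE setT| ->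
  exists H : {set T}, 2 * c < #|H| /\
    forall S : {set T}, S \subset H -> #|S| <= c -> connected_on e (H :\: S).
Proof.
move=> c0 cT cPE.
pose Pm := fun B : {set T} => (2 * c <= #|B|) && (4 * c * (#|B| - c) < #|PE B|).
have PT : Pm setT by rewrite /Pm cardsT cT cPE.
case: (@arg_minnP _ setT Pm (fun B => #|B|) PT) => H PH Hmin.
move/andP: PH => [H2c HPE].
have nP : forall B : {set T}, #|B| < #|H| -> 2 * c <= #|B| -> #|PE B| <= 4 * c * (#|B| - c).
  move=> B hB h2; rewrite leqNgt; apply/negP => hPE.
  have := Hmin B; rewrite /Pm h2 hPE => /(_ isT); clear -hB; lia.
have Hbig : 2 * c < #|H|.
  rewrite ltn_neqAle H2c andbT; apply/eqP => hH.
  have := PE_le H; rewrite -hH in HPE *.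
  rewrite (_ : 2 * c - c = c) in HPE; last by lia.
  move: HPE; set m := c * c; have -> : 4 * c * c = 4 * m by rewrite /m mulnA.
  have -> : 2 * c * (2 * c) = 4 * m by rewrite /m mulnCA !mulnA.
  lia.
have deg : forall v, v \in H -> 2 * c < #|nb H v|.
  move=> v hv.
  have hsz : #|H :\ v| = #|H|.-1 by rewrite (cardsD1 v H) hv.
  have := nP (H :\ v); rewrite hsz => /(_ _ _).
  have h1 : #|H|.-1 < #|H| by clear -Hbig; lia.
  have h2 : 2 * c <= #|H|.-1 by clear -Hbig; lia.
  move=> /(_ h1 h2) h3.
  have h4 := PE_del H v.
  have h5 : 4 * c * (#|H| - c) = 4 * c * (#|H|.-1 - c) + 4 * c.
    rewrite -mulnSr; congr (_ * _); clear -Hbig; lia.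
  clear -h3 h4 h5 HPE; lia.
exists H; split => // S SH Sc x y.
rewrite !in_setD => /andP [xS xH] /andP [yS yH].
apply/idPn => nconn.
have xB : x \in H :\: S by rewrite in_setD xS xH.
have yB : y \in H :\: S by rewrite in_setD yS yH.
set U := [set z in H :\: S | connect (Rel (H :\: S)) x z].
have clos : forall p q, p \in U -> q \in H :\: S -> e p q -> q \in U.
  move=> p q; rewrite inE => /andP [pB cxp] qB epq; rewrite inE qB /=.
  by apply: (connect_trans cxp); apply: connect1; rewrite /= epq pB qB.
have xU : x \in U by rewrite inE xB connect0.
have yU : y \notin U by rewrite inE yB /=.
have UH : U \subset H.
  by apply/subsetP => z; rewrite inE in_setD => /andP [/andP [_ ->]].
set U1 := U :|: S.
set U2 := H :\: U.
have U1H : U1 \subset H :\ y.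
  apply/subsetP => z; rewrite in_setU in_setD1 => /orP [zU | zS].
    by rewrite (subsetP UH z zU) andbT; apply: contraNneq yU => <-.
  by rewrite (subsetP SH z zS) andbT; apply: contraNneq yS => <-.
have U2H : U2 \subset H :\ x.
  apply/subsetP => z; rewrite in_setD1 /U2 in_setD => /andP [zU ->]; rewrite andbT.
  by apply: contraNneq zU => ->.
have cU1 : #|U1| < #|H|.
  apply: (leq_ltn_trans (subset_leq_card U1H)); rewrite (cardsD1 y H) yH; clear; lia.
have cU2 : #|U2| < #|H|.
  apply: (leq_ltn_trans (subset_leq_card U2H)); rewrite (cardsD1 x H) xH; clear; lia.
have N1 : x |: nb H x \subset U1.
  apply/subsetP => z; rewrite in_setU1 [z \in nb _ _]inE => /orP [/eqP -> | /andP [zH exz]].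
    by rewrite in_setU xU.
  rewrite in_setU; case zS: (z \in S); first by rewrite orbT.
  by rewrite (clos x z xU _ exz) // in_setD zS zH.
have N2 : y |: nb H y \subset U2.
  apply/subsetP => z; rewrite in_setU1 [z \in nb _ _]inE => /orP [/eqP -> | /andP [zH eyz]].
    by rewrite in_setD yH (negbTE yU).
  rewrite in_setD zH andbT; apply/negP => zU.
  by move: yU; rewrite (clos z y zU yB) // esym.
have sN : forall w, #|w |: nb H w| = #|nb H w| + 1.
  by move=> w; rewrite cardsU1 inE eirr andbF addnC.
have sU1 : 2 * c <= #|U1|.
  have := subset_leq_card N1; rewrite sN; have := deg x xH; clear; lia.
have sU2 : 2 * c <= #|U2|.
  have := subset_leq_card N2; rewrite sN; have := deg y yH; clear; lia.
have split : PE H \subset PE U1 :|: PE U2.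
  apply/subsetP => -[p q]; rewrite inE /= => /and3P [pH qH epq].
  rewrite in_setU ![_ \in PE _]inE /= /U1 /U2.
  case pU: (p \in U).
    case qS: (q \in S).
      by rewrite !in_setU pU qS orbT epq.
    have qU : q \in U by apply: (clos p q pU _ epq); rewrite in_setD qS qH.
    by rewrite !in_setU pU qU epq.
  case qU: (q \in U).
    case pS: (p \in S).
      by rewrite !in_setU pS qU orbT epq.
    by have := clos q p qU; rewrite in_setD pS pH esym epq pU => /(_ isT isT).
  by rewrite !in_setD pU qU pH qH epq orbT.
have sum1 : #|U1| <= #|U| + #|S| by rewrite cardsU; clear; lia.
have sum2 : #|U2| = #|H| - #|U| by rewrite cardsD (setIidPr UH).
have UHc : #|U| <= #|H| by apply: subset_leq_card.
have e1 := nP U1 cU1 sU1.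
have e2 := nP U2 cU2 sU2.
have e3 : #|PE H| <= #|PE U1| + #|PE U2|.
  apply: (leq_trans (subset_leq_card split)); exact: (leq_card_setU _ _).1.
have e4 : (#|U1| - c) + (#|U2| - c) <= #|H| - c by clear -sum1 sum2 UHc Sc sU1 sU2; lia.
have e5 : 4 * c * (#|U1| - c) + 4 * c * (#|U2| - c) <= 4 * c * (#|H| - c).
  by rewrite -mulnDr leq_mul2l e4 orbT.
clear -e1 e2 e3 e5 HPE; lia.
Qed.
End Graph.

Lemma lt_k (m n d : nat) : 0 < d ->
  ((m%:R : rat) < (n%:R : rat) / (d%:R : rat))%R = (m * d < n).
Proof. by move=> hd; rewrite ltr_pdivlMr ?ltr0n // -natrM ltr_nat. Qed.

Lemma k_lt (m n d : nat) : 0 < d ->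
  ((n%:R : rat) / (d%:R : rat) < (m%:R : rat))%R = (n < m * d).
Proof. by move=> hd; rewrite ltr_pdivrMr ?ltr0n // -natrM ltr_nat. Qed.


Theorem mainTheorem5 (T : finType) (e : rel T) :
  simple_graph e -> 0 < #|T| ->
  exists A : {set T},
    k_connected_on e A ((#|T|%:R : rat) / (5 * alpha e)%:R)%R.
Proof.
move=> [esym eirr] hT.
case/card_gt0P: hT => x0 _.
have indle : forall I : {set T}, independent e I -> #|I| <= alpha e.
  by move=> I hI; apply: (leq_bigmax_cond (F := fun I : {set T} => #|I|)).
have a1 : 0 < alpha e.
  have := indle [set x0]; rewrite cards1; apply.
  apply/forallP => p; apply/implyP; rewrite inE => /eqP ->.
  by apply/forallP => q; apply/implyP; rewrite inE => /eqP ->; rewrite eirr.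
set a := alpha e in indle a1 *.
set n := #|T|.
have n0 : 0 < n by apply/card_gt0P; exists x0.
have d0 : 0 < 5 * a by rewrite muln_gt0.
set c := n.-1 %/ (5 * a).
have hc1 : 5 * a * c < n.
  have := leq_trunc_div n.-1 (5 * a); rewrite -/c mulnC; clear -n0; lia.
have hc2 : n <= c.+1 * (5 * a).
  have := ltn_ceil n.-1 d0; rewrite -/c; clear -n0; lia.
have Sbound : forall m, m * (5 * a) < n -> m <= c.
  by move=> m hm; rewrite /c leq_divRL //; clear -hm; lia.
case: (posnP c) => [c0 | cpos].
- rewrite c0 mul1n in hc2.
  case: (boolP [exists x, exists y, e x y]).
  + case/existsP => x /existsP [y exy].
    have xy : x != y by apply: contraTneq exy => ->; rewrite eirr.
    exists [set x; y]; split.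
      by rewrite k_lt // cards2 xy; clear -hc2 d0; lia.
    move=> S SA; rewrite lt_k // => hS.
    have S0 : S = set0.
      apply/eqP; rewrite -cards_eq0; apply/eqP; clear -hS hc2; nia.
    rewrite S0 setD0 => u v hu hv.
    case: (eqVneq u v) => [-> | nuv]; first exact: connect0.
    apply: connect1; rewrite /= hu hv !andbT.
    move: hu hv nuv; rewrite !inE => /orP [] /eqP -> /orP [] /eqP ->; rewrite ?eqxx //.
    by rewrite esym.
  + move=> hne.
    have nl : n <= a.
      rewrite /n -cardsT; apply: indle; apply/forallP => x; apply/implyP => _; apply/forallP => y.
      apply/implyP => _; apply/negP => exy; apply: (negP hne).
      by apply/existsP; exists x; apply/existsP; exists y.
    exists [set x0]; split.
      by rewrite k_lt // cards1; clear -nl a1; lia.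
    move=> S _ _ u v; rewrite !in_setD !in_set1 => /andP [_ /eqP ->] /andP [_ /eqP ->].
    exact: connect0.
- have tu := @turan T e esym eirr a setT (fun I _ hI => indle I hI).
  have to := PE_PN_total T e.
  rewrite cardsT -/n in tu to.
  set PEn := #|PE T e setT| in to *.
  set PNn := #|PN T e setT| in tu to.
  set N := n * n in tu to.
  have h1 : a * N <= a * PEn + a * PNn + a * n.
    by rewrite -!mulnDr leq_mul2l to orbT.
  have h2 : a * N = a.-1 * N + N by rewrite -{1}(prednK a1) mulSn addnC.
  have h3 : N <= a * PEn + a * n by clear -h1 h2 tu; lia.
  have h4 : 4 * a * c + a < n by clear -hc1 cpos a1; nia.
  have hPE : 4 * c * (n - c) < PEn.
    rewrite ltnNge; apply/negP => hle.
    have h5 : a * PEn <= a * (4 * c * n).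
      rewrite leq_mul2l; apply/orP; right; apply: (leq_trans hle).
      by rewrite leq_mul2l leq_subr orbT.
    have h6 : N <= (4 * a * c + a) * n.
      apply: (leq_trans h3); rewrite mulnDl; apply: leq_add => //.
      by apply: (leq_trans h5); rewrite !mulnA (mulnC a 4).
    have h7 : (4 * a * c + a) * n < N by rewrite /N ltn_mul2r n0.
    by move: (leq_ltn_trans h6 h7); rewrite ltnn.
  have h2c : 2 * c <= n by clear -hc1 a1; nia.
  have [H [HH HS]] := @mader T e esym eirr c cpos h2c hPE.
  exists H; split.
    rewrite k_lt //; apply: (leq_ltn_trans hc2); rewrite ltn_mul2r d0 /=.
    by clear -HH cpos; lia.
  move=> S SH; rewrite lt_k // => hS.
  by apply: HS => //; apply: Sbound.
Qed.
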